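(* There exists a family of bijections $\sigma_{\ell_1,\ell_2}:D_{\ell_1,\ell_2}\to\{1,\dots,\ell_1+\ell_2\}$, indexed by all pairs of non-negative integers $(\ell_1,\ell_2)$, where $D_{\ell_1,\ell_2}=\{(i,j): i\in\{1,2\},\ 1\le j\le \ell_i\}$, and an absolute constant $C$, such that for all $\ell_1,\ell_2\ge 0$ with $L=\ell_1+\ell_2$: the number of elements of $D_{\ell_1,\ell_2}$ whose image under $\sigma_{\ell_1+1,\ell_2}$ differs from their image under $\sigma_{\ell_1,\ell_2}$ is at most $C\log(L+2)$, and likewise with $\sigma_{\ell_1,\ell_2+1}$ in place of $\sigma_{\ell_1+1,\ell_2}$.
   Context: Interpretation: $(i,j)$ denotes the $j$-th word of the $i$-th of two variable-length memories, and $\sigma_{\ell_1,\ell_2}(i,j)$ its position in a combined memory of $\ell_1+\ell_2$ words; the bijection depends only on the two sizes, and incrementing one size (an allocation) or decrementing it (a release, which is the reverse transition) should relocate few words. *)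

(* Defs.v *)
From mathcomp Require Import all_boot.
From Stdlib Require Import Reals.
Set Implicit Arguments. Unset Strict Implicit. Unset Printing Implicit Defensive.

(* D_{l1,l2} = {(i,j) : i in {1,2}, 1 <= j <= l_i}, encoded (0-based in j)
   as the disjoint sum 'I_l1 + 'I_l2: inl j = (1, j+1), inr j = (2, j+1). *)
Definition Dom (l1 l2 : nat) : finType := ('I_l1 + 'I_l2)%type.

Definition incl1 (l1 l2 : nat) (x : Dom l1 l2) : Dom l1.+1 l2 :=
  match x with
  | inl j => inl (widen_ord (leqnSn l1) j)
  | inr j => inr j
  end.

Definition incl2 (l1 l2 : nat) (x : Dom l1 l2) : Dom l1 l2.+1 :=
  match x with
  | inl j => inl j
  | inr j => inr (widen_ord (leqnSn l2) j)
  end.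

(* Number of elements of D_{l1,l2} whose position (as a nat in 0..L-1,
   i.e. the paper's position minus 1) changes between the two layouts. *)
Definition moved1 (sigma : forall l1 l2, Dom l1 l2 -> 'I_(l1 + l2)) (l1 l2 : nat) : nat :=
  #|[pred x : Dom l1 l2 | nat_of_ord (sigma l1.+1 l2 (incl1 x)) != nat_of_ord (sigma l1 l2 x)]|.

Definition moved2 (sigma : forall l1 l2, Dom l1 l2 -> 'I_(l1 + l2)) (l1 l2 : nat) : nat :=
  #|[pred x : Dom l1 l2 | nat_of_ord (sigma l1 l2.+1 (incl2 x)) != nat_of_ord (sigma l1 l2 x)]|.

(* Main.v *)
Require Import Defs.
From mathcomp Require Import all_boot.
From Stdlib Require Import Reals.
From mathcomp Require Import zify.
From Stdlib Require Import Lra.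
Set Implicit Arguments. Unset Strict Implicit.
Definition E (a n : nat) := (a + n + 1) %/ 2 - (a + 1) %/ 2.
Definition se (a : nat) := (a + 1) %/ 2.
Definition so (a : nat) := a %/ 2.
Definition O (a n : nat) := n - E a n.

Fixpoint gf (f a n k : nat) : nat :=
  match f with
  | 0 => a
  | f'.+1 =>
    if n <= 1 then a else
    if ~~ odd k && (k %/ 2 < E a n) then 2 * gf f' (se a) (E a n) (k %/ 2)
    else 2 * gf f' (so a) (O a n) (k %/ 2) + 1
  end.

Definition g a n k := gf n a n k.

Lemma gf_stable f : forall f' a n k, n <= f -> n <= f' -> gf f a n k = gf f' a n k.
Proof.
elim: f => [|f IH] [|f'] a n k /= h1 h2 //.
- by have -> : n = 0 by lia.
- by have -> : n = 0 by lia.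
- case: ifP => // hn.
  have hE : E a n <= f by rewrite /E; lia.
  have hE' : E a n <= f' by rewrite /E; lia.
  have hO : O a n <= f by rewrite /O /E; lia.
  have hO' : O a n <= f' by rewrite /O /E; lia.
  by case: ifP => _; rewrite (IH f').
Qed.

Lemma g1 a k : g a 1 k = a.
Proof. by []. Qed.

Lemma g_eq a n k : 0 < n -> k < n ->
  g a n k = if ~~ odd k && (k %/ 2 < E a n) then 2 * g (se a) (E a n) (k %/ 2)
            else 2 * g (so a) (O a n) (k %/ 2) + 1.
Proof.
move=> hn hk.
have [hn1|hn2] : n = 1 \/ 1 < n by lia.
  subst n. have -> : k = 0 by lia.
  rewrite g1.
  case: (boolP (odd a)) => ha.
    have hE : E a 1 = 0 by rewrite /E; lia.
    have hO : O a 1 = 1 by rewrite /O hE.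
    rewrite hE hO /= g1 /so; lia.
  have hE : E a 1 = 1 by rewrite /E; lia.
  rewrite hE /= g1 /se; lia.
rewrite /g.
case: n hn hk hn2 => [|n] // _ hk hn2 /=.
have -> : (n.+1 <= 1) = false by lia.
have hE : E a n.+1 <= n by rewrite /E; lia.
have hO : O a n.+1 <= n by rewrite /O /E; lia.
by case: ifP => _; [rewrite (@gf_stable n (E a n.+1)) | rewrite (@gf_stable n (O a n.+1))].
Qed.

Lemma idx_O a n k : k < n -> ~~ (~~ odd k && (k %/ 2 < E a n)) -> k %/ 2 < O a n.
Proof. rewrite /O /E => h1 h2. move: h2; case: (boolP (odd k)) => /= hk; lia. Qed.

Lemma extra a n k : k < n -> ~~ odd k -> ~~ (k %/ 2 < E a n) -> k = n.-1.
Proof. rewrite /E => h1 h2 h3. lia. Qed.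

Lemma g_range p : forall n a k, n <= p -> k < n -> a <= g a n k < a + n.
Proof.
elim: p => [|p IH] n a k hp hk; first lia.
have [hn1|hn2] : n = 1 \/ 1 < n by lia.
  subst n; rewrite g1; lia.
rewrite g_eq; [|lia|lia].
case: ifP => hb.
  move/andP: hb => [_ hb].
  have := IH (E a n) (se a) (k %/ 2).
  rewrite /E /se in hb * => H. have := H ltac:(lia) hb. lia.
have hO := idx_O hk (negbT hb).
have := IH (O a n) (so a) (k %/ 2).
rewrite /O /E /so in hO * => H. have := H ltac:(lia) hO. lia.
Qed.

Lemma g_inj p : forall n a k1 k2, n <= p -> k1 < n -> k2 < n -> g a n k1 = g a n k2 -> k1 = k2.
Proof.
elim: p => [|p IH] n a k1 k2 hp h1 h2; first lia.
have [hn1|hn2] : n = 1 \/ 1 < n by lia.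
  move=> _; clear -hn1 h1 h2; lia.
have hn0 : 0 < n by lia.
rewrite (g_eq a hn0 h1) (g_eq a hn0 h2).
case: ifP => hb1; case: ifP => hb2 => heq.
- move/andP: hb1 => [o1 hb1]; move/andP: hb2 => [o2 hb2].
  have hE : E a n <= p by clear -hp hn2; rewrite /E; lia.
  have hh : k1 %/ 2 = k2 %/ 2.
    apply: (IH (E a n) (se a)) => //; clear -heq; lia.
  clear -hh o1 o2; lia.
- clear -heq; lia.
- clear -heq; lia.
- have hO1 := idx_O h1 (negbT hb1).
  have hO2 := idx_O h2 (negbT hb2).
  have hO : O a n <= p by clear -hp hn2; rewrite /O /E; lia.
  have hh : k1 %/ 2 = k2 %/ 2.
    apply: (IH (O a n) (so a)) => //; clear -heq; lia.
  case: (boolP (odd k1)) => o1; case: (boolP (odd k2)) => o2.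
  + clear -hh o1 o2; lia.
  + have hb : ~~ (k2 %/ 2 < E a n) by move: hb2; rewrite o2 /= => /negbT.
    have := extra h2 o2 hb. clear -hh o1 h1; lia.
  + have hb : ~~ (k1 %/ 2 < E a n) by move: hb1; rewrite o1 /= => /negbT.
    have := extra h1 o1 hb. clear -hh o2 h2; lia.
  + have hb : ~~ (k1 %/ 2 < E a n) by move: hb1; rewrite o1 /= => /negbT.
    have hb' : ~~ (k2 %/ 2 < E a n) by move: hb2; rewrite o2 /= => /negbT.
    have := extra h1 o1 hb. have := extra h2 o2 hb'. lia.
Qed.

Definition dc s1 m1 s2 m2 m := count (fun i => g s1 m1 i != g s2 m2 i) (iota 0 m).

Lemma decomp a1 n1 a n k : 0 < n1 -> 0 < n -> k < n1 -> k < n -> g a1 n1 k != g a n k ->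
  [\/ k = n1.-1, k = n.-1,
     [/\ ~~ odd k, k %/ 2 < minn (E a1 n1) (E a n) & g (se a1) (E a1 n1) (k %/ 2) != g (se a) (E a n) (k %/ 2)]
   | [/\ odd k, k %/ 2 < minn (O a1 n1) (O a n) & g (so a1) (O a1 n1) (k %/ 2) != g (so a) (O a n) (k %/ 2)]].
Proof.
move=> h1 h h1k hk.
rewrite (g_eq a1 h1 h1k) (g_eq a h hk).
case: (boolP (odd k)) => ok /=.
  have hO1 : k %/ 2 < O a1 n1 by apply: idx_O => //; rewrite ok.
  have hO : k %/ 2 < O a n by apply: idx_O => //; rewrite ok.
  move=> hne; apply: Or44; split => //.
    by rewrite leq_min hO1 hO.
  apply: contra hne => /eqP ->. done.
case: ifP => hb1; case: ifP => hb2 => hne.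
- apply: Or43; split => //; first by rewrite leq_min hb1 hb2.
  apply: contra hne => /eqP ->. done.
- by apply: Or42; apply: (extra (a:=a)) => //; rewrite hb2.
- by apply: Or41; apply: (extra (a:=a1)) => //; rewrite hb1.
- by apply: Or41; apply: (extra (a:=a1)) => //; rewrite hb1.
Qed.

Lemma dc_decomp a1 n1 a n : 0 < n1 -> 0 < n ->
  dc a1 n1 a n (minn n1 n) <=
  2 + dc (se a1) (E a1 n1) (se a) (E a n) (minn (E a1 n1) (E a n))
    + dc (so a1) (O a1 n1) (so a) (O a n) (minn (O a1 n1) (O a n)).
Proof.
move=> h1 h.
rewrite /dc -!size_filter.
set s1 := filter _ (iota 0 (minn n1 n)).
set Le := filter _ (iota 0 (minn (E a1 n1) (E a n))).
set Lo := filter _ (iota 0 (minn (O a1 n1) (O a n))).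
have -> : 2 + size Le + size Lo = size (n1.-1 :: n.-1 :: map (fun i => 2 * i) Le ++ map (fun i => 2 * i + 1) Lo).
  by rewrite /= size_cat !size_map; lia.
apply: uniq_leq_size; first by rewrite filter_uniq // iota_uniq.
move=> k; rewrite mem_filter mem_iota add0n leq_min => /andP [hne /andP [_ /andP [hk1 hk]]].
rewrite !in_cons mem_cat.
case: (decomp h1 h hk1 hk hne) => [->|->|[ok hb hne']|[ok hb hne']].
- by rewrite eqxx.
- by rewrite eqxx orbT.
- apply/orP; right; apply/orP; right; apply/orP; left.
  apply/mapP; exists (k %/ 2); last by clear -ok; lia.
  by rewrite mem_filter hne' mem_iota add0n.
- apply/orP; right; apply/orP; right; apply/orP; right.
  apply/mapP; exists (k %/ 2); last by clear -ok; lia.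
  by rewrite mem_filter hne' mem_iota add0n.
Qed.

Lemma dc_same s m m' : dc s m s m m' = 0.
Proof.
rewrite /dc (@eq_count _ _ pred0) ?count_pred0 // => i /=; by rewrite eqxx.
Qed.

Lemma dc_le s1 m1 s2 m2 m : dc s1 m1 s2 m2 m <= m.
Proof. by rewrite /dc -[X in _ <= X](size_iota 0 m) count_size. Qed.

Lemma steps t : forall n a, n <= expn 2 t ->
  [/\ dc a n.+1 a n n <= 2 * t + 1, dc a.+1 n a n.+1 n <= 2 * t + 1 & dc a.+1 n a n n <= 4 * t + 2].
Proof.
elim: t => [|t IH] n a hn.
  have hn0 : n <= 1 by exact: hn.
  split; apply: leq_trans (dc_le _ _ _ _ _) _; lia.
have [hn1|hn2] : n <= 1 \/ 1 < n by lia.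
  split; apply: leq_trans (dc_le _ _ _ _ _) _; lia.
rewrite expnS in hn.
have hE : forall a', E a' n <= expn 2 t by move=> a'; rewrite /E; lia.
have hE1 : forall a', (E a' n.+1).-1 <= expn 2 t by move=> a'; rewrite /E; lia.
have hO : forall a', O a' n <= expn 2 t by move=> a'; rewrite /O /E; lia.
have hO1 : forall a', (O a' n.+1).-1 <= expn 2 t by move=> a'; rewrite /O /E; lia.
split.
-
  have := @dc_decomp a n.+1 a n ltac:(lia) ltac:(lia).
  have -> : minn n.+1 n = n by lia.
  case: (boolP (odd (a + n))) => hp.
    have e1 : E a n.+1 = E a n by rewrite /E; lia.
    have o1 : O a n.+1 = (O a n).+1 by rewrite /O /E; lia.
    rewrite e1 o1 dc_same.
    have -> : minn (O a n).+1 (O a n) = O a n by lia.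
    have [hB _ _] := IH (O a n) (so a) (hO a).
    lia.
  have e1 : E a n.+1 = (E a n).+1 by rewrite /E; lia.
  have o1 : O a n.+1 = O a n by rewrite /O /E; lia.
  rewrite e1 o1 dc_same.
  have -> : minn (E a n).+1 (E a n) = E a n by lia.
  have [hB _ _] := IH (E a n) (se a) (hE a).
  lia.
-
  have := @dc_decomp a.+1 n a n.+1 ltac:(lia) ltac:(lia).
  have -> : minn n n.+1 = n by lia.
  case: (boolP (odd a)) => ha.
    have s1 : se a.+1 = se a by rewrite /se; lia.
    have s2 : so a.+1 = (so a).+1 by rewrite /so; lia.
    have [m hm] : exists m, O a n.+1 = m.+1 by exists (O a n.+1).-1; rewrite /O /E; lia.
    have e1 : E a.+1 n = E a n.+1 by rewrite /E; lia.
    have o1 : O a.+1 n = m by move: hm; rewrite /O /E; lia.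
    rewrite s1 s2 e1 o1 hm dc_same.
    have -> : minn m m.+1 = m by lia.
    have hm' : m <= expn 2 t by have := hO1 a; rewrite hm; lia.
    have [_ hD _] := IH m (so a) hm'.
    lia.
  have s1 : se a.+1 = (se a).+1 by rewrite /se; lia.
  have s2 : so a.+1 = so a by rewrite /so; lia.
  have [m hm] : exists m, E a n.+1 = m.+1 by exists (E a n.+1).-1; rewrite /E; lia.
  have o1 : O a.+1 n = O a n.+1 by rewrite /O /E; lia.
  have e1 : E a.+1 n = m by move: hm; rewrite /E; lia.
  rewrite s1 s2 e1 o1 hm dc_same.
  have -> : minn m m.+1 = m by lia.
  have hm' : m <= expn 2 t by have := hE1 a; rewrite hm; lia.
  have [_ hD _] := IH m (se a) hm'.
  lia.
-
  have := @dc_decomp a.+1 n a n ltac:(lia) ltac:(lia).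
  rewrite minnn.
  case: (boolP (odd a)) => ha; case: (boolP (odd n)) => hn'.
  +
    have s1 : se a.+1 = se a by rewrite /se; lia.
    have s2 : so a.+1 = (so a).+1 by rewrite /so; lia.
    have [m hm] : exists m, O a n = m.+1 by exists (O a n).-1; rewrite /O /E; lia.
    have e1 : E a.+1 n = (E a n).+1 by rewrite /E; lia.
    have o1 : O a.+1 n = m by move: hm; rewrite /O /E; lia.
    rewrite s1 s2 e1 o1 hm.
    have -> : minn m m.+1 = m by lia.
    have -> : minn (E a n).+1 (E a n) = E a n by lia.
    have hm' : m <= expn 2 t by have := hO a; rewrite hm; lia.
    have [_ hD _] := IH m (so a) hm'.
    have [hB _ _] := IH (E a n) (se a) (hE a).
    lia.
  +
    have s1 : se a.+1 = se a by rewrite /se; lia.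
    have s2 : so a.+1 = (so a).+1 by rewrite /so; lia.
    have e1 : E a.+1 n = E a n by rewrite /E; lia.
    have o1 : O a.+1 n = O a n by rewrite /O /E; lia.
    rewrite s1 s2 e1 o1 dc_same minnn.
    have [_ _ hA] := IH (O a n) (so a) (hO a).
    lia.
  +
    have s1 : se a.+1 = (se a).+1 by rewrite /se; lia.
    have s2 : so a.+1 = so a by rewrite /so; lia.
    have [m hm] : exists m, E a n = m.+1 by exists (E a n).-1; rewrite /E; lia.
    have e1 : E a.+1 n = m by move: hm; rewrite /E; lia.
    have o1 : O a.+1 n = (O a n).+1 by rewrite /O /E; lia.
    rewrite s1 s2 e1 o1 hm.
    have -> : minn m m.+1 = m by lia.
    have -> : minn (O a n).+1 (O a n) = O a n by lia.
    have hm' : m <= expn 2 t by have := hE a; rewrite hm; lia.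
    have [_ hD _] := IH m (se a) hm'.
    have [hB _ _] := IH (O a n) (so a) (hO a).
    lia.
  +
    have s1 : se a.+1 = (se a).+1 by rewrite /se; lia.
    have s2 : so a.+1 = so a by rewrite /so; lia.
    have e1 : E a.+1 n = E a n by rewrite /E; lia.
    have o1 : O a.+1 n = O a n by rewrite /O /E; lia.
    rewrite s1 s2 e1 o1 dc_same minnn.
    have [_ _ hA] := IH (E a n) (se a) (hE a).
    lia.
Qed.
Lemma g_lt a n (k : 'I_n) : g a n k < a + n.
Proof. by have /andP [_ h] := @g_range n n a k (leqnn n) (ltn_ord k). Qed.

Lemma g_ge a n (k : 'I_n) : a <= g a n k.
Proof. by have /andP [h _] := @g_range n n a k (leqnn n) (ltn_ord k). Qed.

Definition sigma (l1 l2 : nat) (x : Dom l1 l2) : 'I_(l1 + l2) :=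
  match x with
  | inl j => lshift l2 j
  | inr k => Ordinal (@g_lt l1 l2 k)
  end.

Lemma sigma_inj l1 l2 : injective (@sigma l1 l2).
Proof.
case=> [j1|k1] [j2|k2] /= /(congr1 val) /= h.
- by congr inl; apply: val_inj.
- have := @g_ge l1 l2 k2; have := ltn_ord j1; lia.
- have := @g_ge l1 l2 k1; have := ltn_ord j2; lia.
- congr inr; apply: val_inj => /=.
  exact: (@g_inj l2 l2 l1 k1 k2 (leqnn _) (ltn_ord k1) (ltn_ord k2) h).
Qed.

Lemma sigma_bij l1 l2 : bijective (@sigma l1 l2).
Proof.
apply: inj_card_bij; first exact: sigma_inj.
by rewrite card_sum !card_ord.
Qed.

Lemma count_ord n (P : nat -> bool) :
  count (fun k : 'I_n => P k) (enum 'I_n) = count P (iota 0 n).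
Proof. by rewrite -val_enum_ord count_map. Qed.

Lemma moved1_le l1 l2 : moved1 sigma l1 l2 <= dc l1.+1 l2 l1 l2 l2.
Proof.
rewrite /moved1 cardE /dc -count_ord -size_filter.
rewrite -(size_map (@inr 'I_l1 'I_l2)).
apply: uniq_leq_size; first exact: enum_uniq.
case=> [j|k]; rewrite mem_enum inE /=.
  by rewrite eqxx.
move=> h; apply/mapP; exists k => //.
by rewrite mem_filter h mem_enum.
Qed.

Lemma moved2_le l1 l2 : moved2 sigma l1 l2 <= dc l1 l2.+1 l1 l2 l2.
Proof.
rewrite /moved2 cardE /dc -count_ord -size_filter.
rewrite -(size_map (@inr 'I_l1 'I_l2)).
apply: uniq_leq_size; first exact: enum_uniq.
case=> [j|k]; rewrite mem_enum inE /=.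
  by rewrite eqxx.
move=> h; apply/mapP; exists k => //.
by rewrite mem_filter h mem_enum.
Qed.

Lemma expn_pow m n : expn m n = Nat.pow m n.
Proof. elim: n => // n IH. by rewrite expnS IH. Qed.

Lemma ln_mono x y : (0 < x)%R -> (x <= y)%R -> (ln x <= ln y)%R.
Proof.
move=> hx hxy; case: (Rle_lt_or_eq_dec x y hxy) => [hlt|<-].
  by left; apply: ln_increasing.
by right.
Qed.

Lemma final_bound (m L : nat) :
  m <= 4 * (Nat.log2 (L + 2)).+1 + 2 ->
  (INR m <= 10 / ln 2 * ln (INR (L + 2)))%R.
Proof.
move=> hm.
set k := Nat.log2 (L + 2).
have [hk _] := Nat.log2_spec (L + 2) ltac:(apply/ltP; lia).
have hln2 : (0 < ln 2)%R by rewrite -ln_1; apply: ln_increasing; lra.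
have hX : (2 <= INR (L + 2))%R.
  rewrite plus_INR; have := pos_INR L; simpl; lra.
have h2 : (ln 2 <= ln (INR (L + 2)))%R by apply: ln_mono; lra.
have h1 : (INR k * ln 2 <= ln (INR (L + 2)))%R.
  rewrite -ln_pow; last lra.
  apply: ln_mono; first by apply: pow_lt; lra.
  have -> : (2 ^ k)%R = INR (Nat.pow 2 k) by rewrite pow_INR.
  by apply: le_INR.
have hm' : (INR m <= 4 * INR k + 6)%R.
  have : (m <= 4 * k + 6)%coq_nat by apply/leP; lia.
  move/le_INR; rewrite plus_INR mult_INR; simpl; lra.
apply: (Rmult_le_reg_r (ln 2)) => //.
have -> : (10 / ln 2 * ln (INR (L + 2)) * ln 2 = 10 * ln (INR (L + 2)))%R by field; lra.
nra.
Qed.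

Theorem lemma2p1 :
  exists (sigma : forall l1 l2 : nat, Dom l1 l2 -> 'I_(l1 + l2)) (C : R),
    (forall l1 l2 : nat, bijective (sigma l1 l2)) /\
    (forall l1 l2 : nat,
        (INR (moved1 sigma l1 l2) <= C * ln (INR (l1 + l2 + 2)))%R /\
        (INR (moved2 sigma l1 l2) <= C * ln (INR (l1 + l2 + 2)))%R).
Proof.
exists sigma, (10 / ln 2)%R; split; first exact: sigma_bij.
move=> l1 l2.
set t := (Nat.log2 (l1 + l2 + 2)).+1.
have [_ hk] := Nat.log2_spec (l1 + l2 + 2) ltac:(apply/ltP; lia).
have ht : l2 <= expn 2 t.
  rewrite expn_pow /t; move/ltP: hk; lia.
have [hB _ hA] := steps l1 ht.
split; apply: final_bound.
- by apply: leq_trans (moved1_le l1 l2) _; rewrite /t in hA.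
- apply: leq_trans (moved2_le l1 l2) _; rewrite /t in hB; lia.
Qed.
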